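(* Let $\Phi$ be a satisfiable 2-CNF and $\mathcal L_0$ any set of literals. Let $\Phi-\mathcal C(\Phi,\mathcal L_0)$ denote the formula obtained from $\Phi$ by deleting the clauses in $\mathcal C(\Phi,\mathcal L_0)$. Then $$Z\big(\Phi-\mathcal C(\Phi,\mathcal L_0)\big)\le 2^{|\mathcal V(\Phi,\mathcal L_0)|\cdot\mathbb 1\{\mathcal C(\Phi,\mathcal L_0)\ne\emptyset\}}\,Z(\Phi).$$
   Context: A 2-CNF is a conjunction of clauses, each the disjunction of two literals on two distinct variables. $Z(\cdot)$ is the number of satisfying assignments. For a literal $l$, $|l|$ denotes its underlying variable. $\mathcal L(\Phi,\mathcal L_0)$ is the output of Unit Clause Propagation: start from $\mathcal L=\mathcal L_0$ and, while $\Phi$ has a clause $l\vee\neg l'$ with $l'\in\mathcal L$ and $l\notin\mathcal L$, add $l$. Then: - $\mathcal V(\Phi,\mathcal L_0)=\{|l|:l\in\mathcal L(\Phi,\mathcal L_0)\}$; - $\mathcal V_0(\Phi,\mathcal L_0)$ is the set of $x$ with both $x,\neg x\in\mathcal L(\Phi,\mathcal L_0)$; - $\mathcal C(\Phi,\mathcal L_0)$ is the set of clauses of $\Phi$ all of whose variables lie in $\mathcal V_0(\Phi,\mathcal L_0)$. *)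

(* Defs.v *)
From mathcomp Require Import all_boot.
Set Implicit Arguments. Unset Strict Implicit. Unset Printing Implicit Defensive.

(* A literal is a pair (x, b): b = true means the positive literal x,
   b = false means the negative literal ~x. *)
Definition lit (n : nat) := ('I_n * bool)%type.
Definition var_of {n} (l : lit n) : 'I_n := l.1.
Definition neg {n} (l : lit n) : lit n := (l.1, ~~ l.2).

Definition clause (n : nat) := (lit n * lit n)%type.
Definition cnf (n : nat) := seq (clause n).

Definition wf_clause {n} (c : clause n) : bool := var_of c.1 != var_of c.2.
Definition is_2cnf {n} (Phi : cnf n) : bool := all wf_clause Phi.

Definition assignment (n : nat) := {ffun 'I_n -> bool}.
Definition lit_sat {n} (s : assignment n) (l : lit n) : bool := s l.1 == l.2.
Definition clause_sat {n} (s : assignment n) (c : clause n) : bool :=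
  lit_sat s c.1 || lit_sat s c.2.
Definition cnf_sat {n} (s : assignment n) (Phi : cnf n) : bool :=
  all (clause_sat s) Phi.

Definition Z {n} (Phi : cnf n) : nat := #|[set s : assignment n | cnf_sat s Phi]|.
Definition satisfiable {n} (Phi : cnf n) : Prop := exists s : assignment n, cnf_sat s Phi.

Definition ucp_step {n} (Phi : cnf n) (L0 : {set lit n}) (X : {set lit n})
  : {set lit n} :=
  L0 :|: X :|: [set l : lit n | has (fun c : clause n =>
        ((c.1 == l) && (neg c.2 \in X)) || ((c.2 == l) && (neg c.1 \in X))) Phi].

(* L(Phi, L0): the result of UCP = least fixpoint (closure of L0 under the rule). *)
Definition ucpL {n} (Phi : cnf n) (L0 : {set lit n}) : {set lit n} :=
  fixset (ucp_step Phi L0).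

Definition ucpV {n} (Phi : cnf n) (L0 : {set lit n}) : {set 'I_n} :=
  [set var_of l | l in ucpL Phi L0].

Definition ucpV0 {n} (Phi : cnf n) (L0 : {set lit n}) : {set 'I_n} :=
  [set x : 'I_n | ((x, true) \in ucpL Phi L0) && ((x, false) \in ucpL Phi L0)].

Definition inC {n} (Phi : cnf n) (L0 : {set lit n}) (c : clause n) : bool :=
  (var_of c.1 \in ucpV0 Phi L0) && (var_of c.2 \in ucpV0 Phi L0).

Definition delC {n} (Phi : cnf n) (L0 : {set lit n}) : cnf n :=
  filter (fun c => ~~ inC Phi L0 c) Phi.

Definition C_nonempty {n} (Phi : cnf n) (L0 : {set lit n}) : bool :=
  has (inC Phi L0) Phi.

(* Main.v *)
Require Import Defs.
From mathcomp Require Import all_boot.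
Set Implicit Arguments. Unset Strict Implicit.

Section S.
Variables (n : nat) (Phi : cnf n) (L0 : {set lit n}).

Lemma ucp_mono : {homo ucp_step Phi L0 : X Y / X \subset Y}.
Proof.
move=> X Y sXY; apply/subsetP => l; rewrite /ucp_step !inE.
case/orP => [/orP[->//|/(subsetP sXY) ->]|]; first by rewrite orbT.
move=> H; apply/orP; right; apply: sub_has H => c /=.
by case/orP=> /andP[-> /(subsetP sXY) ->]; rewrite ?orbT.
Qed.

Local Notation L := (ucpL Phi L0).

Lemma closure (c : clause n) : c \in Phi ->
  (neg c.2 \in L -> c.1 \in L) /\ (neg c.1 \in L -> c.2 \in L).
Proof.
move=> cP; have E := fixsetK ucp_mono; rewrite /ucpL.
split=> H; rewrite -E /ucp_step !inE; apply/orP; right; apply/hasP; exists c => //;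
  by rewrite eqxx H ?orbT.
Qed.

Lemma inV x : (x \in ucpV Phi L0) = ((x, true) \in L) || ((x, false) \in L).
Proof.
apply/idP/idP.
  by case/imsetP=> [[y b] Hl ->]; case: b Hl => /= ->; rewrite ?orbT.
by case/orP=> H; apply/imsetP; [exists (x, true) | exists (x, false)].
Qed.

Lemma inV0 x : (x \in ucpV0 Phi L0) = ((x, true) \in L) && ((x, false) \in L).
Proof. by rewrite inE. Qed.


Lemma V0_lits (l : lit n) : var_of l \in ucpV0 Phi L0 -> (l \in L) && (neg l \in L).
Proof. by case: l => x b; rewrite inV0 /neg /var_of /=; case: b => /andP[-> ->]. Qed.

Variables (sg s : assignment n).

Definition sfix : assignment n :=
  [ffun x => if x \in ucpV0 Phi L0 then sg x
             else if x \in ucpV Phi L0 then (x, true) \in L else s x].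

Lemma lit_L (l : lit n) : l \in L -> var_of l \notin ucpV0 Phi L0 -> lit_sat sfix l.
Proof.
case: l => x b Hl; rewrite /lit_sat /sfix ffunE /var_of /= => H0.
rewrite (negbTE H0) inV; move: H0; rewrite inV0.
by case: b Hl => /= ->; rewrite ?andbT ?orbT //= => /negbTE ->.
Qed.

Lemma lit_V0 (l : lit n) : var_of l \in ucpV0 Phi L0 -> lit_sat sfix l = lit_sat sg l.
Proof. by move=> H; rewrite /lit_sat /sfix ffunE /var_of H. Qed.

Lemma lit_out (l : lit n) : l \notin L -> neg l \notin L -> lit_sat sfix l = lit_sat s l.
Proof.
case: l => x b H1 H2.
have HV : x \notin ucpV Phi L0 by rewrite inV; case: b H1 H2 => /= /negbTE -> /negbTE ->.
have HV0 : x \notin ucpV0 Phi L0 by rewrite inV0; case: b H1 H2 => /= /negbTE ->; rewrite ?andbF.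
by rewrite /lit_sat /sfix ffunE /= (negbTE HV) (negbTE HV0).
Qed.

Lemma negK (l : lit n) : neg (neg l) = l.
Proof. by case: l => x b; rewrite /neg /= negbK. Qed.

Lemma sfix_sat : cnf_sat sg Phi -> cnf_sat s (delC Phi L0) -> cnf_sat sfix Phi.
Proof.
move=> /allP Hsg /allP Hs; apply/allP => c cP.
have [C1 C2] := closure cP.
have Hc := Hsg c cP.
rewrite /clause_sat.
case: c cP C1 C2 Hc => l m cP /= C1 C2 Hc.
case E1: (var_of l \in ucpV0 Phi L0); case E2: (var_of m \in ucpV0 Phi L0).
- by rewrite !lit_V0.
- have /andP[_ nl] := V0_lits E1.
  by rewrite (lit_L (C2 nl)) ?E2 ?orbT.
- have /andP[_ nm] := V0_lits E2.
  by rewrite (lit_L (C1 nm)) ?E1.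
- case Hl: (l \in L); first by rewrite lit_L ?E1.
  case Hm: (m \in L); first by rewrite (lit_L Hm) ?E2 ?orbT.
  case Hnl: (neg l \in L); first by rewrite Hm in C2; by have := C2 Hnl.
  case Hnm: (neg m \in L); first by rewrite Hl in C1; by have := C1 Hnm.
  rewrite !lit_out ?Hl ?Hm ?Hnl ?Hnm //.
  have := Hs (l, m); rewrite /delC mem_filter /inC /= E1 cP; exact.
Qed.

End S.

Lemma V0_V n (Phi : cnf n) L0 x : x \in ucpV0 Phi L0 -> x \in ucpV Phi L0.
Proof. by rewrite inV inV0 => /andP[-> _]. Qed.

Theorem lemma5p1 (n : nat) (Phi : cnf n) (L0 : {set lit n}) :
  is_2cnf Phi -> satisfiable Phi ->
  Z (delC Phi L0) <= 2 ^ (#|ucpV Phi L0| * C_nonempty Phi L0) * Z Phi.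
Proof.
move=> _ [sg Hsg].
rewrite /C_nonempty; case HC: (has (inC Phi L0) Phi); last first.
  rewrite muln0 expn0 mul1n /delC.
  have: all (predC (inC Phi L0)) Phi by rewrite all_predC HC.
  by move/all_filterP => ->.
rewrite muln1.
set V := ucpV Phi L0.
pose h (s : assignment n) :=
  (sfix Phi L0 sg s, [ffun x : {x : 'I_n | x \in V} => s (val x)]).
have hinj : injective h.
  move=> s1 s2 [E1 E2]; apply/ffunP => x.
  case xV: (x \in V).
    by move/ffunP: E2 => /(_ (exist _ x xV)); rewrite !ffunE.
  move/ffunP: E1 => /(_ x); rewrite /sfix !ffunE xV.
  have -> : (x \in ucpV0 Phi L0) = false.
    by apply/negbTE/negP => /V0_V; rewrite -/V xV.
  by [].
rewrite /Z -(card_imset _ hinj).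
set A := [set s | _].
set B := [set s | cnf_sat s Phi].
have sub : h @: A \subset setX B [set: {ffun {x : 'I_n | x \in V} -> bool}].
  apply/subsetP => p /imsetP [s]; rewrite inE => Hs ->.
  by rewrite !inE /= andbT sfix_sat.
apply: (leq_trans (subset_leq_card sub)).
rewrite cardsX cardsT card_ffun card_bool mulnC.
have -> : #|{: {x : 'I_n | x \in V}}| = #|V| by rewrite card_sig; apply: eq_card.
done.
Qed.
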